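(* Let $p,q$ be relatively prime positive integers, and let $\mathcal{T}_{q/p,p/q}$ be the triangle with vertices $(0,0)$, $(p/q,0)$ and $(0,q/p)$. Then $q$ is a quasi-period of the Ehrhart quasipolynomial $I(t)=\#(t\mathcal{T}_{q/p,p/q}\cap\mathbb{Z}^2)$ if and only if \[ p\mid(q^2+1)\qquad\text{and}\qquad \gcd\!\left(\frac{q^2+1}{p},\,p\right)=1. \]
   Context: The Ehrhart function of a rational polygon is a quasipolynomial $\sum_i c_i(t)t^i$ with periodic coefficient functions $c_i$; an integer $q$ is a quasi-period if every $c_i$ is periodic with period $q$. *)

(* Defs.v *)
From mathcomp Require Import all_boot all_order all_algebra.
Set Implicit Arguments. Unset Strict Implicit. Unset Printing Implicit Defensive.
Import Order.TTheory GRing.Theory Num.Theory.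
Local Open Scope ring_scope.

Definition in_dil_tri (p q t : nat) (x y : rat) : bool :=
  (0 <= x) && (0 <= y) &&
  (x / (p%:R / q%:R) + y / (q%:R / p%:R) <= t%:R).

(* Ehrhart function I(t) = #(t T ∩ Z^2).  Every lattice point of t T has
   0 <= x <= t*p/q <= p*t and 0 <= y <= t*q/p <= q*t (for p, q >= 1), so it
   suffices to count inside this box. *)
Definition ehrhart_tri (p q t : nat) : nat :=
  (\sum_(x < (p * t).+1) \sum_(y < (q * t).+1)
      (in_dil_tri p q t (x%:R) (y%:R) : nat))%N.

Definition is_quasi_period (f : nat -> nat) (n : nat) : Prop :=
  exists (d : nat) (c : nat -> nat -> rat),
    (forall i t, c i (t + n)%N = c i t) /\
    (forall t, (0 < t)%N -> (f t)%:R = \sum_(i < d) c i t * (t%:R) ^+ i).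

(* Main.v *)
Require Import Defs.
From mathcomp Require Import all_boot all_order all_algebra.
From mathcomp Require Import zify ring lra.
Set Implicit Arguments. Unset Strict Implicit. Unset Printing Implicit Defensive.
Import Order.TTheory GRing.Theory Num.Theory.

Lemma sum_ext_zero (f : nat -> nat) m n : (m <= n)%N ->
  (forall x, (m <= x)%N -> f x = 0%N) -> (\sum_(x < n) f x = \sum_(x < m) f x)%N.
Proof.
move=> mn h; rewrite -!(big_mkord xpredT) (@big_cat_nat _ _ _ m 0 n xpredT) /= //.
rewrite [X in (_ + X)%N]big1_seq ?addn0 // => x /andP[_].
by rewrite mem_index_iota => /andP[/h].
Qed.

Lemma count_le (b K m : nat) : (0 < b)%N ->
  (\sum_(y < m) (b * y <= K)%N : nat)%N = minn m (K %/ b).+1.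
Proof.
move=> b0; elim: m => [|m IH]; first by rewrite big_ord0 min0n.
rewrite big_ord_recr /= IH.
have [H|H] := leqP (b * m) K.
- have : (m <= K %/ b)%N by rewrite leq_divRL // mulnC.
  move=> {}H; rewrite /minn; case: ifP; case: ifP; lia.
- have : (K %/ b < m)%N by rewrite ltn_divLR // mulnC.
  move=> {}H; rewrite /minn; case: ifP; case: ifP; lia.
Qed.

Lemma mod_split (p X r : nat) : (r < p)%N ->
  ((p * X + r) %% (p * p) = p * (X %% p) + r)%N.
Proof.
move=> rp; have -> : (p * X + r = (X %/ p) * (p * p) + (p * (X %% p) + r))%N.
  by rewrite {1}(divn_eq X p); ring.
rewrite modnMDl modn_small //.
have : (X %% p < p)%N by rewrite ltn_pmod //; lia.
nia.
Qed.

Lemma perm_sum (p m c : nat) : coprime c p ->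
  (\sum_(k < p) ((m + k * c) %% p) = \sum_(k < p) k)%N.
Proof.
move=> cop; case: (posnP p) => [->|p0]; first by rewrite !big_ord0.
pose h (k : 'I_p) : 'I_p := Ordinal (ltn_pmod (m + k * c) p0).
have hinj : injective h.
  move=> k1 k2 /(congr1 val) /= /eqP; rewrite eqn_modDl => E.
  apply/val_inj => /=.
  wlog le12 : k1 k2 E / (k1 <= k2)%N.
    move=> W; case: (leqP k1 k2) => H; first exact: W.
    by symmetry; apply: W => //; [rewrite eq_sym | apply: ltnW].
  move: E; rewrite eq_sym eqn_mod_dvd ?leq_mul2r ?le12 ?orbT // -mulnBl.
  rewrite Gauss_dvdl; last by rewrite coprime_sym.
  move=> D; have : (k2 - k1 < p)%N by have := ltn_ord k2; lia.
  move=> L; have := dvdn_leq; case: (posnP (k2 - k1)) => [|P]; first lia.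
  by move=> /(_ _ _ P D); lia.
by rewrite [RHS](reindex_inj hinj).
Qed.

Lemma sub1_mod (p n : nat) : (0 < p)%N ->
  ((n + 1) %% p + p * (p %| n + 1) = n %% p + 1)%N.
Proof.
move=> p0; rewrite /dvdn -modnDml.
have := ltn_pmod n p0; set r := n %% p => rp.
case: (ltnP (r + 1) p) => H.
- rewrite (modn_small H) addn_eq0 andbF /=; lia.
- have E : (r + 1 = p)%N by lia.
  rewrite E modnn eqxx /=; lia.
Qed.

Lemma in_dil_iff (p q t x y : nat) : (0 < p)%N -> (0 < q)%N ->
  in_dil_tri p q t x%:R y%:R = (q * q * x + p * p * y <= p * q * t)%N.
Proof.
move=> p0 q0; rewrite /in_dil_tri !ler0n /=.
have pn : (p%:R : rat) != 0%R by rewrite pnatr_eq0 -lt0n.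
have qn : (q%:R : rat) != 0%R by rewrite pnatr_eq0 -lt0n.
have -> : ((x%:R : rat) / (p%:R / q%:R) + y%:R / (q%:R / p%:R)
   = (q * q * x + p * p * y)%N%:R / (p * q)%N%:R)%R.
  rewrite !natrD !natrM; field; rewrite ?pn ?qn //.
have pq0 : (0 < (p * q)%N%:R :> rat)%R by rewrite ltr0n muln_gt0 p0 q0.
by rewrite ler_pdivrMr // -natrM ler_nat (mulnC t).
Qed.

Definition gN (p q N x : nat) : nat :=
  if (q * q * x <= N)%N then ((N - q * q * x) %/ (p * p) + 1)%N else 0%N.
Definition G (p q N : nat) : nat := (\sum_(x < N.+1) gN p q N x)%N.

Lemma gN_big (p q N x : nat) : (0 < q)%N -> (N < x)%N -> gN p q N x = 0%N.
Proof. move=> q0 Nx; rewrite /gN; case: ifP => // H. have : (0 < q * q)%N by rewrite muln_gt0 q0. nia. Qed.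

Lemma ehr_G (p q t : nat) : (0 < p)%N -> (0 < q)%N ->
  ehrhart_tri p q t = G p q (p * q * t).
Proof.
move=> p0 q0; rewrite /ehrhart_tri /G.
rewrite (@sum_ext_zero (gN p q (p * q * t)) (p * t).+1); last first.
- by move=> x Hx; rewrite /gN; case: ifP => //; nia.
- nia.
apply: eq_bigr => x _.
under eq_bigr do rewrite in_dil_iff //.
rewrite /gN; case: ifP => H.
- have E : forall y : nat, (q * q * x + p * p * y <= p * q * t)%N
                 = (p * p * y <= p * q * t - q * q * x)%N.
    by move=> y; apply/idP/idP; lia.
  under eq_bigr do rewrite E.
  rewrite count_le ?muln_gt0 ?p0 //.
  have B : ((p * q * t - q * q * x) %/ (p * p) < (q * t).+1)%N.
    rewrite ltn_divLR ?muln_gt0 ?p0 //; nia.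
  by rewrite (minn_idPr _) ?addn1.
- rewrite big1 // => y _; apply/eqP; rewrite eqb0; apply/negP; move/negbT: H; lia.
Qed.

Lemma G_shift (p q N : nat) : (0 < p)%N -> (0 < q)%N ->
  G p q (N + p * (q * q)) =
  (G p q N + p + \sum_(k < p) ((N + (k + 1) * (q * q)) %/ (p * p)))%N.
Proof.
move=> p0 q0; have a0 : (0 < q * q)%N by rewrite muln_gt0 q0.
rewrite /G; set a := (q * q)%N; set M := (N + p * a)%N.
rewrite -(big_mkord xpredT) (@big_cat_nat _ _ _ p 0 M.+1 xpredT) //=; last by nia.
have Hadd := big_addn 0 M.+1 p xpredT (gN p q M).
rewrite add0n in Hadd; rewrite {}Hadd.
have E2 : forall i, gN p q M (i + p) = gN p q N i.
  move=> i; rewrite /gN -/a.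
  have -> : (a * (i + p) <= M)%N = (a * i <= N)%N by rewrite /M; apply/idP/idP; nia.
  by have -> : (M - a * (i + p) = N - a * i)%N by rewrite /M; nia.
rewrite [X in (_ + X)%N = _](eq_bigr (fun i => gN p q N i)); last by move=> i _; exact: E2.
rewrite (big_mkord xpredT (gN p q N)) (@sum_ext_zero _ N.+1); last first.
- by move=> x Hx; apply: gN_big.
- rewrite /M; nia.
rewrite big_nat_rev /= add0n.
have E1 : forall i, (i < p)%N -> gN p q M (p - i.+1) = ((N + (i + 1) * a) %/ (p * p) + 1)%N.
  move=> i ip; rewrite /gN -/a.
  have -> : (a * (p - i.+1) <= M)%N by rewrite /M; nia.
  by have -> : (M - a * (p - i.+1) = N + (i + 1) * a)%N by rewrite /M; nia.
rewrite (@eq_big_nat _ _ _ 0 p _ (fun i => ((N + (i + 1) * a) %/ (p * p) + 1)%N)); last first.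
  by move=> i /andP[_ ip]; apply: E1.
rewrite big_mkord big_split /= sum_nat_const card_ord muln1.
ring.
Qed.

Definition F (p q w : nat) : nat :=
  (\sum_(k < p) ((p * w + (k + 1) * (q * q)) %% (p * p)))%N.

Lemma key_id (p q t : nat) : (0 < p)%N -> (0 < q)%N ->
  (p * p * ehrhart_tri p q (t + q) + F p q (q * t) =
   p * p * ehrhart_tri p q t + p * p * p + p * p * q * t
     + q * q * \sum_(k < p) (k + 1))%N.
Proof.
move=> p0 q0; rewrite !ehr_G //.
have -> : (p * q * (t + q) = p * q * t + p * (q * q))%N by ring.
rewrite G_shift //.
set N := (p * q * t)%N.
have S1 : (\sum_(k < p) (N + (k + 1) * (q * q)) = p * N + q * q * \sum_(k < p) (k + 1))%N.
  rewrite big_split /= sum_nat_const card_ord big_distrr /=; congr (_ + _)%N.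
  by apply: eq_bigr => i _; rewrite mulnC.
have S2 : (\sum_(k < p) (N + (k + 1) * (q * q)) =
   p * p * \sum_(k < p) ((N + (k + 1) * (q * q)) %/ (p * p)) + F p q (q * t))%N.
  rewrite /F big_distrr -big_split /=; apply: eq_bigr => i _.
  by rewrite (mulnA p q t) -/N [in LHS](divn_eq (N + _) (p * p)) (mulnC (_ %/ _)).
move: S1 S2; set D := (\sum_(k < p) _ %/ _)%N; set T := (\sum_(k < p) (k+1))%N.
set S := (\sum_(k < p) _)%N => S1 S2.
rewrite /N in S1 *; nia.
Qed.

Lemma F_mod (p q w : nat) : F p q w = F p q (w %% p).
Proof.
rewrite /F; apply: eq_bigr => k _.
have -> : (p * w + (k + 1) * (q * q) = (w %/ p) * (p * p) + (p * (w %% p) + (k + 1) * (q * q)))%N.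
  by rewrite {1}(divn_eq w p); ring.
by rewrite modnMDl.
Qed.

Lemma F_cond (p q c w : nat) : (0 < p)%N -> (q * q + 1 = c * p)%N ->
  F p q w = (p * \sum_(k < p) ((w + c - 1 + k * c) %% p) + \sum_(k < p) (p - 1 - k))%N.
Proof.
move=> p0 H; have c0 : (0 < c)%N by case: c H => //; rewrite mul0n addn1.
rewrite /F big_distrr -big_split /=; apply: eq_bigr => k _.
have kp := ltn_ord k.
have -> : (p * w + (k + 1) * (q * q) = p * (w + c - 1 + k * c) + (p - 1 - k))%N.
  have E : ((k + 1) * (q * q) + (k + 1) = (k + 1) * c * p)%N by rewrite -mulnA -H; ring.
  have E2 : (w + c - 1 + k * c = (w + k * c + c) - 1)%N by lia.
  rewrite E2 mulnBr muln1; nia.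
by rewrite mod_split //; lia.
Qed.

Lemma F_const (p q c w : nat) : (0 < p)%N -> (q * q + 1 = c * p)%N -> coprime c p ->
  F p q w = F p q 0.
Proof.
move=> p0 H cop; rewrite !(F_cond _ p0 H).
by rewrite (perm_sum (w + c - 1) cop) (perm_sum (0 + c - 1) cop).
Qed.

Lemma F_sum (p q : nat) : (0 < p)%N -> coprime q p ->
  (\sum_(u < p) F p q u = p * p * \sum_(k < p) k + p * \sum_(k < p) k)%N.
Proof.
move=> p0 cop; rewrite /F exchange_big /=.
have cop2 : coprime (q * q) p by rewrite coprimeMl cop.
have E : forall k : 'I_p, (\sum_(u < p) ((p * u + (k + 1) * (q * q)) %% (p * p))
      = p * \sum_(j < p) j + p * (((k + 1) * (q * q)) %% p))%N.
  move=> k; set w := ((k + 1) * (q * q))%N.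
  have E1 : forall u : 'I_p, ((p * u + w) %% (p * p) = p * ((w %/ p + u * 1) %% p) + w %% p)%N.
    move=> u; rewrite -mod_split ?ltn_pmod //; congr (_ %% _)%N.
    by rewrite {1}(divn_eq w p); ring.
  under eq_bigr do rewrite E1.
  rewrite big_split /= -big_distrr /= (perm_sum _ (coprime1n p)).
  by rewrite sum_nat_const card_ord mulnC.
under eq_bigr do rewrite E.
rewrite big_split /= sum_nat_const card_ord -big_distrr /=.
have -> : (\sum_(i < p) ((i + 1) * (q * q)) %% p = \sum_(i < p) (q * q + i * (q * q)) %% p)%N.
  by apply: eq_bigr => i _; congr (_ %% _)%N; ring.
rewrite (perm_sum _ cop2); ring.
Qed.

Lemma tri_sum n : (2 * \sum_(k < n) k + n = n * n)%N.
Proof. elim: n => [|n IH]; first by rewrite big_ord0. rewrite big_ord_recr /=. move: IH; set s := (\sum_(i < n) _)%N; nia. Qed.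

Lemma div_from_F (p q : nat) : (0 < p)%N -> coprime q p ->
  F p q 0 = ((p + 1) * \sum_(k < p) k)%N -> (p %| q * q + 1)%N.
Proof.
move=> p0 cop HF.
set X := (q * q)%N; set S := (\sum_(k < p) k)%N.
set D := (\sum_(k < p) (((k + 1) * X) %/ (p * p)))%N.
have S1 : (\sum_(k < p) ((k + 1) * X) = X * (S + p))%N.
  rewrite -big_distrl /= big_split /= sum_nat_const card_ord muln1; ring.
have S2 : (\sum_(k < p) ((k + 1) * X) = p * p * D + F p q 0)%N.
  rewrite /F /D big_distrr -big_split /=; apply: eq_bigr => i _.
  by rewrite muln0 add0n [in LHS](divn_eq (_ * X) (p * p)) (mulnC (_ %/ _)).
have T := tri_sum p; rewrite -/S in T.
have H1 : (p * ((X + 1) * (p + 1)) = p * (p * (2 * D + p + 1)))%N.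
  have e1 : (2 * (X * (S + p)) = X * (p * p) + X * p)%N by rewrite -T; ring.
  have e2 : (2 * ((p + 1) * S) + (p + 1) * p = (p + 1) * (p * p))%N by rewrite -T; ring.
  have e3 : (X * (S + p) = p * p * D + (p + 1) * S)%N by rewrite -S1 S2 HF.
  nia.
move/eqP: H1; rewrite eqn_pmul2l // => /eqP H1.
have : (p %| (X + 1) * (p + 1))%N by rewrite H1 dvdn_mulr.
by rewrite Gauss_dvdl // addn1 coprimenS.
Qed.

Lemma gcd_from_F (p q c : nat) : (1 < p)%N -> (q * q + 1 = c * p)%N ->
  F p q 1 = F p q 0 -> coprime c p.
Proof.
move=> p1 H HF; have p0 : (0 < p)%N by lia.
have c0 : (0 < c)%N by case: c H => //; rewrite mul0n addn1.
move: HF; rewrite !(F_cond _ p0 H) => /eqP; rewrite eqn_add2r eqn_pmul2l // => /eqP HF.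
set Z := (\sum_(k < p) (p %| (k + 1) * c : nat))%N.
have E : (\sum_(k < p) ((1 + c - 1 + k * c) %% p) + p * Z
          = \sum_(k < p) ((0 + c - 1 + k * c) %% p) + p)%N.
  rewrite /Z big_distrr -big_split /=.
  rewrite -[X in (_ = _ + X)%N](muln1 p) -[X in (_ = _ + X * 1)%N](card_ord p) -sum_nat_const.
  rewrite -big_split /=; apply: eq_bigr => k _.
  have e1 : (1 + c - 1 + k * c = ((k + 1) * c - 1) + 1)%N by nia.
  have e2 : ((k + 1) * c = ((k + 1) * c - 1) + 1)%N by nia.
  have e3 : (c - 1 + k * c = (k + 1) * c - 1)%N by nia.
  by rewrite e1 add0n e3 -sub1_mod // -e2.
have Z1 : Z = 1%N.
  move: E; rewrite HF => /eqP; rewrite eqn_add2l -{2}(muln1 p) eqn_pmul2l // => /eqP.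
  done.
apply: contraT => ncop.
set g := gcdn c p.
have g1 : (1 < g)%N.
  have : (0 < g)%N by rewrite gcdn_gt0 p0 orbT.
  by move: ncop; rewrite /coprime -/g; case: g => [|[|]].
have gp : (g %| p)%N by apply: dvdn_gcdr.
have gc : (g %| c)%N by apply: dvdn_gcdl.
have pg_lt : (p %/ g < p)%N by apply: ltn_Pdiv.
have pg_pos : (0 < p %/ g)%N by rewrite divn_gt0 ?(dvdn_leq p0 gp) // ltnW.
have k1lt : (p - 1 < p)%N by lia.
pose k1 : 'I_p := Ordinal k1lt.
have k2lt : (p %/ g - 1 < p)%N by lia.
pose k2 : 'I_p := Ordinal k2lt.
have hk1 : (p %| (k1 + 1) * c)%N by rewrite /= subnK // dvdn_mulr.
have hk2 : (p %| (k2 + 1) * c)%N.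
  rewrite /= subnK // -(divnK gc) mulnA (mulnC _ (c %/ g)) -mulnA divnK //.
  exact: dvdn_mull.
have k12 : k2 != k1 by apply/eqP => /(congr1 val) /=; lia.
have : (2 <= Z)%N.
  rewrite /Z (bigD1 k1) //= (bigD1 k2) //= hk1 hk2 addnA.
  exact: leq_addr.
by rewrite Z1.
Qed.
Section RS.
Local Open Scope ring_scope.

Lemma poly_periodic (P : {poly rat}) (n : nat) : (0 < n)%N ->
  (forall s : nat, P.[(s + n)%:R] = P.[s%:R]) -> forall s : nat, P.[s%:R] = P.[0].
Proof.
move=> n0 Hper.
have Hm : forall i : nat, P.[(i * n)%:R] = P.[0].
  elim=> [|i IH]; first by rewrite mul0n.
  by rewrite mulSn addnC Hper.
suff R0 : P - P.[0]%:P = 0.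
  by move=> s; move/eqP: R0; rewrite subr_eq0 => /eqP ->; rewrite !hornerC.
apply: (@roots_geq_poly_eq0 _ _ [seq (i * n)%:R | i <- iota 0 (size (P - P.[0]%:P))]).
- apply/allP => x /mapP [i _ ->]; rewrite /root !hornerE Hm subrr //.
- rewrite map_inj_uniq ?iota_uniq // => i j /eqP; rewrite eqr_nat eqn_pmul2r // => /eqP //.
- by rewrite size_map size_iota.
Qed.

Lemma F_shift (p q w m : nat) : F p q (w + p * m) = F p q w.
Proof. by rewrite F_mod [RHS]F_mod addnC mulnC modnMDl. Qed.

Lemma dir1_F (p q : nat) : (0 < p)%N -> (0 < q)%N ->
  is_quasi_period (ehrhart_tri p q) q ->
  forall s : nat, F p q (q * (p + q * s)) = F p q (q * p).
Proof.
move=> p0 q0 [d [c [Hper Hrep]]].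
have Hc : forall i s, c i (p + q * s)%N = c i p.
  move=> i; elim=> [|s IH]; first by rewrite muln0 addn0.
  have -> : (p + q * s.+1 = (p + q * s) + q)%N by ring.
  by rewrite Hper.
pose P : {poly rat} := \sum_(i < d) (c i p)%:P * ((p%:R)%:P + (q%:R)%:P * 'X) ^+ i.
have HP : forall s : nat, (ehrhart_tri p q (p + q * s)%N)%:R = P.[s%:R].
  move=> s; rewrite Hrep; last by lia.
  rewrite horner_sum; apply: eq_bigr => i _; rewrite !hornerE Hc natrD natrM //.
set T := (\sum_(k < p) (k + 1))%N.
pose Q : {poly rat} := ((p * p)%N%:R)%:P * P + ((p * p * p + q * q * T)%N%:R)%:P
   + ((p * p * q)%N%:R)%:P * ((p%:R)%:P + (q%:R)%:P * 'X)
   - ((p * p)%N%:R)%:P * (P \Po ('X + 1)).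
have HQ : forall s : nat, (F p q (q * (p + q * s)))%:R = Q.[s%:R].
  move=> s; have K := key_id (p + q * s) p0 q0.
  have e : (p + q * s + q = p + q * s.+1)%N by ring.
  rewrite e in K.
  rewrite /Q !hornerE horner_comp !hornerE.
  have -> : s%:R + 1 = (s.+1)%:R :> rat by rewrite -addn1 natrD.
  rewrite -!HP.
  move/(congr1 (fun n : nat => n%:R : rat)): K; rewrite !natrD !natrM => K.
  rewrite natrD natrM in K.
  lra.
have Qper : forall s : nat, Q.[(s + p)%:R] = Q.[s%:R].
  move=> s; rewrite -!HQ; congr (_%:R).
  have -> : (q * (p + q * (s + p)) = q * (p + q * s) + p * (q * q))%N by ring.
  by rewrite F_shift.
have h0 : (F p q (q * p))%:R = Q.[0].
  by have := HQ 0%N; rewrite muln0 addn0 mulr0n.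
move=> s; apply/eqP; rewrite -(@eqr_nat rat) HQ h0.
by rewrite (poly_periodic p0 Qper s).
Qed.

Lemma dir1 (p q : nat) : (0 < p)%N -> (0 < q)%N -> coprime p q ->
  is_quasi_period (ehrhart_tri p q) q ->
  (p %| q * q + 1)%N /\ coprime ((q * q + 1) %/ p) p.
Proof.
move=> p0 q0 cop H; have HF := dir1_F p0 q0 H.
have copq : coprime q p by rewrite coprime_sym.
case: (ltnP 1 p) => p1; last first.
  have -> : p = 1%N by lia.
  by rewrite dvd1n coprimen1.
have Fall : forall u, (u < p)%N -> F p q u = F p q 0.
  have cop2 : coprime (q * q) p by rewrite coprimeMl copq.
  have qq0 : (0 < q * q)%N by rewrite muln_gt0 q0.
  case: (egcdnP p qq0) => km kn Hk _.
  rewrite /coprime in cop2; rewrite (eqP cop2) in Hk.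
  move=> u up.
  have E1 := HF (u * km)%N.
  have E2 : (q * (p + q * (u * km)) = u + p * (q + u * kn))%N.
    transitivity (q * p + u * (km * (q * q)))%N; first by ring.
    by rewrite Hk; ring.
  rewrite E2 F_shift in E1.
  by rewrite E1 (mulnC q p) -[(p * q)%N]add0n F_shift.
have Fsum := F_sum p0 copq.
have HF0 : F p q 0 = ((p + 1) * \sum_(k < p) k)%N.
  have : (\sum_(u < p) F p q u = p * F p q 0)%N.
    rewrite (eq_bigr (fun _ => F p q 0)) ?sum_nat_const ?card_ord // => u _.
    exact: Fall.
  rewrite Fsum -mulnA -mulnDr => /eqP; rewrite eqn_pmul2l // => /eqP <-.
  ring.
have Hd := div_from_F p0 copq HF0.
split => //.
apply: (@gcd_from_F p q) => //; first by rewrite divnK.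
exact: Fall.
Qed.

Lemma dir2 (p q : nat) : (0 < p)%N -> (0 < q)%N ->
  (p %| q * q + 1)%N -> coprime ((q * q + 1) %/ p) p ->
  is_quasi_period (ehrhart_tri p q) q.
Proof.
move=> p0 q0 Hd cop.
have Hc : (q * q + 1 = (q * q + 1) %/ p * p)%N by rewrite divnK.
have Fc : forall w, F p q w = F p q 0 by move=> w; exact: (F_const w p0 Hc cop).
set I := ehrhart_tri p q.
have rec : forall t, (I (t + q) + I 0 = I t + I q + q * t)%N.
  move=> t; have K1 := key_id t p0 q0; have K0 := key_id 0 p0 q0.
  rewrite Fc in K1; rewrite !muln0 add0n addn0 in K0.
  rewrite -/I in K1 K0.
  have pp0 : (0 < p * p)%N by rewrite muln_gt0 p0.
  apply/eqP; rewrite -(eqn_pmul2l pp0); apply/eqP.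
  nia.
set K : rat := (I q)%:R - (I 0%N)%:R.
have recq : forall r s : nat, (I (r + s * q)%N)%:R =
    (I r)%:R + s%:R * (q%:R * r%:R + K) + q%:R ^+ 2 * s%:R * (s%:R - 1) / 2 :> rat.
  move=> r; elim=> [|s IH]; first by rewrite mul0n addn0 mulr0n; field.
  have := rec (r + s * q)%N.
  rewrite (_ : (r + s * q + q = r + s.+1 * q)%N); last by ring.
  move/(congr1 (fun n : nat => n%:R : rat)); rewrite !natrD !natrM => H.
  have e : (I (r + s.+1 * q)%N)%:R = (I (r + s * q)%N)%:R + (I q)%:R
       + q%:R * (r%:R + s%:R * q%:R) - (I 0%N)%:R :> rat by lra.
  by rewrite e IH /K -addn1 natrD; field.
have qn : (q%:R : rat) != 0 by rewrite pnatr_eq0 -lt0n.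
exists 3%N.
exists (fun i t => let rr : rat := (t %% q)%N%:R in let qq : rat := q%:R in
  match i with
  | 0%N => (I (t %% q)%N)%:R - rr * (qq * rr + K) / qq + rr * (rr + qq) / 2
  | 1%N => (qq * rr + K) / qq - rr - qq / 2
  | _ => 1 / 2 end).
split.
- by move=> i t; rewrite /= modnDr.
- move=> t _; rewrite !big_ord_recr big_ord0 /= add0r.
  have ht := divn_eq t q.
  set r := (t %% q)%N; set s := (t %/ q)%N.
  rewrite ht addnC recq addnC natrD natrM.
  field => //.
Qed.
End RS.

Theorem theorem3p1 (p q : nat) :
  (0 < p)%N -> (0 < q)%N -> coprime p q ->
  (is_quasi_period (ehrhart_tri p q) q <->
   (p %| q ^ 2 + 1)%N /\ coprime ((q ^ 2 + 1) %/ p) p).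
Proof.
move=> p0 q0 cop; rewrite -mulnn; split.
- exact: dir1.
- by case=> H1 H2; exact: dir2.
Qed.
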